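(* Let $\mathcal{G}\subseteq\mathbb{N}$ be a finite set with $0\in\mathcal{G}$, let $\lambda\in\mathbb{N}$, let $L=\max\mathcal{G}+\lambda$, and let $\mathcal{D}=\mathcal{G}\cup(\max\mathcal{G}-\mathcal{G}+\lambda)$. Then the following are equivalent: (i) $\mathcal{D}+\mathcal{D}=\{0,1,\ldots,2L\}$; (ii) $\mathcal{D}-\mathcal{D}=\{-L,\ldots,L\}$; (iii) both of the following conditions hold: (C1) $(\mathcal{G}-\mathcal{G})\cup(\mathcal{G}+\mathcal{G}-L)\cup(L-(\mathcal{G}+\mathcal{G}))\supseteq\{0,1,\ldots,\max\mathcal{G}\}$; (C2) $\mathcal{G}+\mathcal{G}\supseteq\{0,1,\ldots,\lambda-1\}$ (vacuous if $\lambda=0$).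
   Context: For sets $\mathcal{A},\mathcal{B}\subseteq\mathbb{Z}$ and $c\in\mathbb{Z}$: $\mathcal{A}+\mathcal{B}=\{a+b: a\in\mathcal{A},b\in\mathcal{B}\}$, $\mathcal{A}-\mathcal{B}=\{a-b\}$, $\mathcal{A}+c=\{a+c\}$, $c-\mathcal{A}=\{c-a\}$. The set $\mathcal{D}=\mathcal{G}\cup(\max\mathcal{G}-\mathcal{G}+\lambda)$ is called the symmetric array with generator $\mathcal{G}$ and shift $\lambda$ (S-$\mathcal{G}$); its aperture is $\max\mathcal{D}=L=\max\mathcal{G}+\lambda$. *)

(* Defs.v *)
From Stdlib Require Import ZArith List.
Open Scope Z_scope.

(* maximum of a finite list of integers (0 for the empty list; only used on
   nonempty lists of nonnegative integers) *)
Definition maxZ (G : list Z) : Z := fold_right Z.max 0 G.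

Definition in_sum (A B : list Z) (x : Z) : Prop :=
  exists a b, In a A /\ In b B /\ x = a + b.
Definition in_diff (A B : list Z) (x : Z) : Prop :=
  exists a b, In a A /\ In b B /\ x = a - b.

Definition symArray (G : list Z) (lam : Z) : list Z :=
  G ++ map (fun g => maxZ G - g + lam) G.

(* Main.v *)
Require Import Defs.
From Stdlib Require Import ZArith List Lia.
Open Scope Z_scope.

Lemma maxZ_ge (G : list Z) g : In g G -> g <= maxZ G.
Proof.
  induction G as [|a G IH]; simpl; [tauto|].
  intros [->|H]; [lia|]. specialize (IH H); lia.
Qed.

Lemma inD G lam d : In d (symArray G lam) <->
  In d G \/ exists g, In g G /\ d = maxZ G - g + lam.
Proof.
  unfold symArray. rewrite in_app_iff, in_map_iff.
  split; intros [H|[g [H1 H2]]]; auto; right; exists g; auto.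
Qed.

Section S.
Variables (G : list Z) (lam : Z).
Hypothesis HGnat : forall g, In g G -> 0 <= g.
Hypothesis Hlam : 0 <= lam.
Let M := maxZ G.
Let L := M + lam.
Let D := symArray G lam.
Let P x := in_diff G G x \/ in_sum G G (x + L) \/ in_sum G G (L - x).

Lemma bnd g : In g G -> 0 <= g <= M.
Proof. intros H; split; [apply HGnat; auto| apply maxZ_ge; auto]. Qed.

Lemma diff_char x : in_diff D D x <-> P x.
Proof.
  unfold P, D, in_diff, in_sum. split.
  - intros [a [b [Ha [Hb ->]]]].
    apply inD in Ha; apply inD in Hb.
    destruct Ha as [Ha|[g1 [Ha ->]]]; destruct Hb as [Hb|[g2 [Hb ->]]].
    + left; eauto.
    + right; left; exists a, g2; repeat split; auto; unfold L, M; lia.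
    + right; right; exists g1, b; repeat split; auto; unfold L, M; lia.
    + left; exists g2, g1; repeat split; auto; lia.
  - intros [[a [b [Ha [Hb ->]]]]|[[a [b [Ha [Hb E]]]]|[a [b [Ha [Hb E]]]]]].
    + exists a, b; repeat split; auto; apply inD; auto.
    + exists a, (M - b + lam); repeat split; try (apply inD; eauto); unfold L in E; lia.
    + exists (M - a + lam), b; repeat split; try (apply inD; eauto); unfold L in E; lia.
Qed.

Lemma sum_char x : in_sum D D x <-> P (x - L).
Proof.
  unfold P, D, in_diff, in_sum. split.
  - intros [a [b [Ha [Hb ->]]]].
    apply inD in Ha; apply inD in Hb.
    destruct Ha as [Ha|[g1 [Ha ->]]]; destruct Hb as [Hb|[g2 [Hb ->]]].
    + right; left; exists a, b; repeat split; auto; lia.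
    + left; exists a, g2; repeat split; auto; unfold L, M; lia.
    + left; exists b, g1; repeat split; auto; unfold L, M; lia.
    + right; right; exists g1, g2; repeat split; auto; unfold L, M; lia.
  - intros [[a [b [Ha [Hb E]]]]|[[a [b [Ha [Hb E]]]]|[a [b [Ha [Hb E]]]]]].
    + exists a, (M - b + lam); repeat split; try (apply inD; eauto); unfold L in E; lia.
    + exists a, b; repeat split; auto; try (apply inD; auto); lia.
    + exists (M - a + lam), (M - b + lam); repeat split; try (apply inD; eauto); unfold L in E; lia.
Qed.

Lemma P_bnd x : P x -> - L <= x <= L.
Proof.
  unfold P, L; intros [[a [b [Ha [Hb ->]]]]|[[a [b [Ha [Hb E]]]]|[a [b [Ha [Hb E]]]]]];
  apply bnd in Ha; apply bnd in Hb; lia.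
Qed.

Lemma P_sym x : P x -> P (- x).
Proof.
  unfold P; intros [[a [b [Ha [Hb ->]]]]|[[a [b [Ha [Hb E]]]]|[a [b [Ha [Hb E]]]]]].
  - left; exists b, a; repeat split; auto; lia.
  - right; right; exists a, b; repeat split; auto; lia.
  - right; left; exists a, b; repeat split; auto; lia.
Qed.

End S.

Theorem mainTheorem3 (G : list Z) (lam : Z)
  (HGnat : forall g, In g G -> 0 <= g)
  (HG0 : In 0 G)
  (Hlam : 0 <= lam) :
  let L := maxZ G + lam in
  let D := symArray G lam in
  ((forall x, in_sum D D x <-> 0 <= x <= 2 * L) <->
   (forall x, in_diff D D x <-> - L <= x <= L)) /\
  ((forall x, in_diff D D x <-> - L <= x <= L) <->
   ((forall x, 0 <= x <= maxZ G ->
       in_diff G G x \/ in_sum G G (x + L) \/ in_sum G G (L - x)) /\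
    (forall x, 0 <= x <= lam - 1 -> in_sum G G x))).
Proof.
  intros L D.
  pose proof (diff_char G lam) as DC. pose proof (sum_char G lam) as SC.
  pose proof (P_bnd G lam HGnat) as PB. pose proof (P_sym G lam) as PS.
  pose proof (bnd G HGnat) as B.
  cbv zeta in *. fold L D in DC, SC, PB, PS.
  set (P := fun x => in_diff G G x \/ in_sum G G (x + L) \/ in_sum G G (L - x)) in *.
  assert (HM : 0 <= maxZ G) by (apply maxZ_ge; auto).
  split.
  - split.
    + intros H x. rewrite DC. specialize (H (x + L)). rewrite SC in H.
      replace (x + L - L) with x in H by lia. rewrite H. lia.
    + intros H x. rewrite SC, <- DC, H. lia.
  - split.
    + intros H. split.
      * intros x Hx. apply DC, H. unfold L; lia.
      * intros x Hx. assert (HP : P (L - x)) by (apply DC, H; unfold L; lia).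
        destruct HP as [[a [b [Ha [Hb E]]]]|[[a [b [Ha [Hb E]]]]|Hs]].
        -- apply B in Ha; apply B in Hb; unfold L in E; lia.
        -- apply B in Ha; apply B in Hb; unfold L in E; lia.
        -- replace (L - (L - x)) with x in Hs by lia; exact Hs.
    + intros [C1 C2] x. rewrite DC. split; [apply PB; auto|].
      intros Hx.
      assert (K : forall y, 0 <= y <= L -> P y).
      { intros y Hy. destruct (Z_le_gt_dec y (maxZ G)).
        - apply C1; lia.
        - right; right. apply C2. unfold L in *; lia. }
      destruct (Z_le_gt_dec 0 x).
      * apply K; lia.
      * replace x with (- - x) by lia. apply PS, K; lia.
Qed.
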